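(* Let $X=(x_1\ \cdots\ x_{n+1})$ be a real $n\times(n+1)$ matrix all of whose maximal ($n\times n$) minors have the same sign. Let $X'$ be obtained from $X$ by switching two columns $x_i,x_j$ whose indices $i,j$ are both even or both odd. Then every maximal minor of $X'$ has the opposite sign of the corresponding maximal minor of $X$. Here the maximal minor for a column index set $I$ is taken with columns in increasing order of index. *)

(* Defs.v *)
From mathcomp Require Import all_boot all_order all_algebra.
Set Implicit Arguments. Unset Strict Implicit. Unset Printing Implicit Defensive.
Import Order.TTheory GRing.Theory Num.Theory.
Local Open Scope ring_scope.

(* The maximal minor of an n x (n+1) matrix X obtained by deleting column k,
   keeping the remaining columns in increasing order of index
   (lift k : 'I_n -> 'I_n.+1 is the increasing enumeration of the other
   column indices). *)
Definition maxminor (R : comNzRingType) (n : nat) (X : 'M[R]_(n, n.+1))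
  (k : 'I_n.+1) : R := \det (colsub (lift k) X).

(* Main.v *)
Require Import Defs.
From mathcomp Require Import all_boot all_order all_algebra.
From mathcomp Require Import fingroup perm.
Set Implicit Arguments. Unset Strict Implicit. Unset Printing Implicit Defensive.
Import Order.TTheory GRing.Theory Num.Theory.
Local Open Scope ring_scope.

Lemma cof_maxminor (R : realFieldType) n (A : 'M[R]_n.+1) (Y : 'M[R]_(n, n.+1)) k :
  (forall r c, A (lift ord0 r) c = Y r c) ->
  cofactor A ord0 k = (-1) ^+ k * maxminor Y k.
Proof.
move=> HA; rewrite /cofactor /maxminor add0n; congr (_ * _); congr (\det _).
by apply/matrixP => r c; rewrite !mxE HA.
Qed.

Lemma det_xcol (R : realFieldType) n (A : 'M[R]_n) i j :
  i != j -> \det (xcol i j A) = - \det A.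
Proof.
move=> ij; rewrite xcolE det_mulmx /tperm_mx det_perm odd_tperm ij.
by rewrite expr1 mulrN1.
Qed.

Theorem lemma3p9 (R : realFieldType) (n : nat) (X : 'M[R]_(n, n.+1))
  (i j : 'I_n.+1) :
  (forall k l : 'I_n.+1, 0 < maxminor X k * maxminor X l) ->
  i != j -> odd i = odd j ->
  forall k : 'I_n.+1, maxminor (xcol i j X) k * maxminor X k < 0.
Proof.
case: n X i j => [|n] X i j Hpos ij oij m.
  by move: ij; rewrite (ord1 i) (ord1 j) eqxx.
set s := tperm i j.
pose A : 'M[R]_n.+2 := \matrix_(r, c)
  (if r == ord0 then (c == s m)%:R else X (inord r.-1) c).
have HA r c : A (lift ord0 r) c = X r c.
  by rewrite mxE /= inord_val.
have HB r c : xcol i j A (lift ord0 r) c = xcol i j X r c.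
  by rewrite !mxE /= inord_val.
have E := det_xcol A ij.
rewrite (expand_det_row _ ord0) (expand_det_row A ord0) in E.
rewrite (bigD1 m) //= big1 in E; last first.
  move=> k km; rewrite !mxE /= (inj_eq perm_inj) (negbTE km) mul0r //.
rewrite (bigD1 (s m)) //= big1 in E; last first.
  move=> k km; rewrite !mxE /= (negbTE km) mul0r //.
rewrite !mxE /= !eqxx !mul1r !addr0 in E.
rewrite (cof_maxminor _ HB) (cof_maxminor _ HA) in E.
have os : odd (s m) = odd m.
  rewrite /s; case: tpermP => // -> ; by [|].
have Hs : maxminor (xcol i j X) m = - maxminor X (s m).
  move: E; rewrite -(signr_odd _ (s m)) os signr_odd => E.
  apply: (mulfI (x := (-1) ^+ m)); first by rewrite signr_eq0.
  by rewrite E mulrN.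
idtac.
rewrite Hs mulNr oppr_lt0; exact: Hpos.
Qed.
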